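(* Let $A$ be a circular $m\times n$ matrix and let $\Gamma$ be a circuit in $D(A)$. Then $(\pi_+-\pi_-)^T\tilde A=p(\Gamma)\mathbf{1}^T$.
   Context: Notation: $[n]=\{1,\dots,n\}$ with addition mod $n$ (index $0$ identified with $n$); for $a,c\in[n]$ with $t\ge0$ minimal such that $a+t\equiv c\pmod n$, $[a,c)_n=\{a,\dots,a+t-1\}$ (mod $n$). An $m\times n$ $\{0,1\}$-matrix $A$ is circular if for each row $i$ there are $\ell_i\in[n]$ and an integer $2\le k_i\le n-1$ with row $i$ the incidence vector of $[\ell_i,\ell_i+k_i)_n$. $\tilde A=\binom{A}{I}\in\{0,1\}^{(m+n)\times n}$ with $I$ the $n\times n$ identity. $D(A)$: node set $[n]$ (labels mod $n$); forward arcs $a_i=(\ell_i-1,\ell_i+k_i-1)$ ($i\in[m]$, length $k_i$) and $a_{m+j}=(j-1,j)$ ($j\in[n]$, length $1$); reverse arcs $\bar a_i=(\ell_i+k_i-1,\ell_i-1)$ (length $-k_i$) and $\bar a_{m+j}=(j,j-1)$ (length $-1$). A circuit is a simple directed circuit; its winding number $p(\Gamma)$ satisfies $p(\Gamma)n=\sum_{a\in E(\Gamma)}l(a)$. $\pi_+\in\{0,1\}^{m+n}$ has $(\pi_+)_k=1$ iff $a_k\in E(\Gamma)$, and $\pi_-\in\{0,1\}^{m+n}$ has $(\pi_-)_k=1$ iff $\bar a_k\in E(\Gamma)$. *)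

(* Defs.v *)
From HB Require Import structures.
From mathcomp Require Import all_boot all_order all_algebra.
Set Implicit Arguments. Unset Strict Implicit. Unset Printing Implicit Defensive.
Import Order.TTheory GRing.Theory Num.Theory.
Local Open Scope ring_scope.

(* Conventions: columns of an m x n matrix are 'I_n; the 0-based column j
   corresponds to the paper's column j+1 in [n].  The row parameters
   l i (the paper's l_i, 1-based, in [n]) and k i are naturals.
   Nodes of D(A) are naturals taken modulo n (label x = label x %% n). *)

(* c (1-based, in [n]) lies in the circular interval [l, l+k)_n (l in [n]) *)
Definition in_cint (n l k c : nat) : bool := ((c + n - l) %% n < k)%N.

Definition circular (m n : nat) (A : 'M[int]_(m, n)) (l k : 'I_m -> nat) : Prop :=
  forall i : 'I_m,
    [/\ (1 <= l i <= n)%N, (2 <= k i <= n.-1)%N &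
        forall j : 'I_n, A i j = (in_cint n (l i) (k i) j.+1)%:R].

Definition tildeA (m n : nat) (A : 'M[int]_(m, n)) : 'M[int]_(m + n, n) :=
  col_mx A 1%:M.

(* Arcs of D(A): (x, true) = a_x (forward), (x, false) = \bar a_x (reverse),
   with x : 'I_(m+n); x < m is a row arc, x = m + j' (0-based j') is the arc
   a_{m+j} with j = j'+1. *)
Definition darc (m n : nat) := ('I_(m + n) * bool)%type.

Section DA.
Variables (m n : nat) (l k : 'I_m -> nat).

Definition fwd_tail (x : 'I_(m + n)) : nat :=
  match split x with inl i => (l i).-1 | inr j => nat_of_ord j end.
Definition fwd_head (x : 'I_(m + n)) : nat :=
  match split x with inl i => (l i + k i).-1 | inr j => j.+1 end.
Definition fwd_len (x : 'I_(m + n)) : int :=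
  match split x with inl i => (k i)%:Z | inr j => 1 end.

Definition arc_tail (a : darc m n) : nat :=
  (if a.2 then fwd_tail a.1 else fwd_head a.1) %% n.
Definition arc_head (a : darc m n) : nat :=
  (if a.2 then fwd_head a.1 else fwd_tail a.1) %% n.
Definition arc_len (a : darc m n) : int :=
  if a.2 then fwd_len a.1 else - fwd_len a.1.

Definition is_circuit (c : seq (darc m n)) : Prop :=
  [/\ c != [::],
      cycle (fun a b => arc_head a == arc_tail b) c &
      uniq (map arc_tail c)].

(* winding number: p(Gamma) * n = sum of arc lengths *)
Definition winding (c : seq (darc m n)) : int :=
  ((\sum_(a <- c) arc_len a) %/ (n%:Z))%Z.

Definition pi_plus (c : seq (darc m n)) : 'cV[int]_(m + n) :=
  \col_x (((x, true) \in c) : nat)%:R.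
Definition pi_minus (c : seq (darc m n)) : 'cV[int]_(m + n) :=
  \col_x (((x, false) \in c) : nat)%:R.
End DA.

(* Main.v *)
Require Import Defs.
From HB Require Import structures.
From mathcomp Require Import all_boot all_order all_algebra.
From mathcomp Require Import zify.
Import Order.TTheory GRing.Theory Num.Theory.
Local Open Scope ring_scope.

Lemma modn2 (x n : nat) : (x < 2 * n)%N -> (x %% n = if (x < n) then x else (x - n))%N.
Proof.
move=> h; case: ifP => hx; first by rewrite modn_small.
have -> : x = ((x - n) + n)%N by rewrite subnK // leqNgt hx.
rewrite modnDr modn_small; first by rewrite addnK.
lia.
Qed.

Definition phi (n j t : nat) : nat := (t + n - j.+1) %% n.

Lemma arc_fwd (m n : nat) (A : 'M[int]_(m, n)) (l k : 'I_m -> nat)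
  (hA : circular A l k) (j : 'I_n) (x : 'I_(m + n)) :
  (phi n j (fwd_head l k x %% n))%:Z - (phi n j (fwd_tail l x %% n))%:Z
  = fwd_len k x - n%:Z * tildeA A x j.
Proof.
have jn := ltn_ord j.
rewrite /fwd_head /fwd_tail /fwd_len /phi.
case E: (split x) => [i|j'].
  have -> : x = lshift n i by rewrite -(splitK x) E.
  rewrite /tildeA col_mxEu.
  have [/andP [l1 l2] /andP [k1 k2] hAi] := hA i.
  rewrite hAi /in_cint natz.
  rewrite (modn_small (_ : (l i).-1 < n)%N); last by lia.
  rewrite (@modn2 ((l i + k i).-1) n _); last by lia.
  rewrite (@modn2 ((j.+1 + n - l i)) n _); last by lia.
  case: ifP => h1; rewrite ?(@modn2 ((l i + k i).-1 + n - j.+1) n _);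
    try lia; rewrite ?(@modn2 (((l i + k i).-1 - n) + n - j.+1) n _); try lia;
    rewrite (@modn2 ((l i).-1 + n - j.+1) n _); try lia;
    repeat case: ifP => ?; rewrite /=; lia.
have -> : x = rshift m j' by rewrite -(splitK x) E.
rewrite /tildeA col_mxEd mxE natz.
have j'n := ltn_ord j'.
rewrite (modn_small j'n).
rewrite (@modn2 (j'.+1) n _); last by lia.
rewrite (@modn2 (j' + n - j.+1) n _); last by lia.
have -> : (j' == j) = (nat_of_ord j' == nat_of_ord j) by [].
case: ifP => h1; rewrite ?(@modn2 (j'.+1 + n - j.+1) n _); try lia;
  rewrite ?(@modn2 ((j'.+1 - n) + n - j.+1) n _); try lia;
  repeat case: ifP => ?; repeat case: eqP => ?; rewrite /=; lia.
Qed.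

Lemma telescope (T : Type) (h t : T -> nat) (g : nat -> int) (x : T) (s : seq T) :
  path (fun a b => h a == t b) x s ->
  \sum_(a <- x :: s) (g (h a) - g (t a)) = g (h (last x s)) - g (t x).
Proof.
elim: s x => [|y s IH] x /=; first by rewrite big_seq1.
move=> /andP [/eqP hxy hp].
rewrite big_cons IH // hxy.
lia.
Qed.

Lemma cycle_tele (T : Type) (h t : T -> nat) (g : nat -> int) (c : seq T) :
  cycle (fun a b => h a == t b) c -> \sum_(a <- c) (g (h a) - g (t a)) = 0.
Proof.
case: c => [|x s'] /=; first by rewrite big_nil.
rewrite rcons_path => /andP [hp /eqP he].
by rewrite (@telescope _ h t g _ _ hp) he subrr.
Qed.

Theorem corollary4p2 (m n : nat) (A : 'M[int]_(m, n)) (l k : 'I_m -> nat)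
  (hA : circular A l k) (c : seq (darc m n)) (hc : is_circuit l k c) :
  (pi_plus c - pi_minus c)^T *m tildeA A = const_mx (winding k c).
Proof.
apply/matrixP => i0 j; rewrite !mxE.
have n0 : (0 < n)%N by case: (n) j => // [[]].
case: hc => cn0 hcyc hu.
have uc : uniq c := map_uniq hu.
pose s (a : darc m n) : int := if a.2 then tildeA A a.1 j else - tildeA A a.1 j.
have H1 : \sum_(x < m + n) (pi_plus c - pi_minus c)^T i0 x * tildeA A x j
          = \sum_(a <- c) s a.
  rewrite [RHS]big_uniq // [RHS]big_mkcond /=.
  rewrite [RHS](_ : _ = \sum_(x < m + n) \sum_(b : bool)
     (if (x, b) \in c then s (x, b) else 0)); last first.
    by rewrite pair_big; apply: eq_big => // -[x b].
  apply: eq_bigr => x _; rewrite big_bool /= /s /=.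
  set T := tildeA A x j; rewrite !mxE.
  by case: ((x, true) \in c); case: ((x, false) \in c); rewrite /=; lia.
rewrite H1.
pose g (t : nat) : int := (phi n j t)%:Z.
have H2 : \sum_(a <- c) (g (arc_head l k a) - g (arc_tail l k a)) = 0.
  exact: cycle_tele.
have H3 : forall a, g (arc_head l k a) - g (arc_tail l k a) = arc_len k a - n%:Z * s a.
  case=> x [|]; rewrite /g /arc_head /arc_tail /arc_len /s /=.
    exact: arc_fwd.
  have := @arc_fwd _ _ _ _ _ hA j x; rewrite /= => h; lia.
have H4 : \sum_(a <- c) arc_len k a = n%:Z * \sum_(a <- c) s a.
  apply/eqP; rewrite -subr_eq0 mulr_sumr -sumrB; apply/eqP; rewrite -[RHS]H2.
  by apply: eq_bigr => a _; rewrite H3.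
rewrite /winding H4 mulKz //.
by rewrite eqz_nat -lt0n.
Qed.
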